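(* Let $\Xi$ be an admissible Gibbs process with activity $\lambda<\lambda_c(d)$. For $p\in\mathbb{N}$ and disjoint $\Psi_1,\dots,\Psi_p\in\mathcal{B}_b(\mathcal{C}^{(d)})$, \[ \mathbb{E}\Bigl(\prod_{i=1}^p\Xi(\Psi_i)\Bigr)\le\lambda^p\prod_{i=1}^p\mu(\Psi_i). \]
   Context: $\mathcal{C}^{(d)}$: nonempty compact subsets of $\mathbb{R}^d$ with Hausdorff metric $d_H$; $z(K)$ centre of the circumscribed ball of $K$. $\mathbf{N}$: $\mathbb{N}_0\cup\{\infty\}$-valued measures on $\mathcal{C}^{(d)}$ finite on $d_H$-balls; particle processes are random elements of $\mathbf{N}$, assumed simple, stationary, a.s. nonzero. $\mathcal{B}_b(\mathcal{C}^{(d)}):=\{z^{-1}(B):B\subseteq\mathbb{R}^d\text{ bounded Borel}\}$. $\xi^{(m)}$: $m$-th factorial measure. $\mathbb{Q}$: probability measure with $z(K)=\mathbf 0$ and $K\subseteq B(\mathbf 0,R)$ $\mathbb{Q}$-a.s. ($R>0$ fixed); $\mu:=\iint\mathbf 1\{K+x\in\cdot\}\mathbb{Q}(dK)dx$; $\Pi_{\lambda\mu}$ Poisson process with intensity $\lambda\mu$. Admissible Gibbs process: potentials $\varphi_n:(\mathcal{C}^{(d)})^n\to(-\infty,\infty]$, $n\ge2$, measurable, symmetric, translation invariant, zero when $\max_{i<j}d_H(K_i,K_j)>R_\varphi$; $\kappa(K,\xi)=0$ if $K\in\operatorname{supp}\xi$, else $\kappa(K,\xi)=\exp[-\sum_{n\ge2}\frac1{(n-1)!}\int\varphi_n(K,L_1,\ldots,L_{n-1})\xi^{(n-1)}(d(L_1,\ldots,L_{n-1}))]$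 (series set to $0$ if its negative part diverges, assumed not to happen), $\kappa\le1$; $\Xi$ satisfies $\mathbb{E}\int f(K,\Xi-\delta_K)\Xi(dK)=\lambda\mathbb{E}\int f(K,\Xi)\kappa(K,\Xi)\mu(dK)$ for all measurable $f\ge0$. $\lambda_c(d)$: critical intensity for percolation of $\Pi_{\lambda\mu}$ (infinite component of the graph on the support with edges between intersecting particles). *)

(* Defs.v *)
From HB Require Import structures.
From mathcomp Require Import all_boot all_order all_algebra all_fingroup.
From mathcomp Require Import all_classical all_reals all_analysis.
From mathcomp Require Import measurable_realfun.

Set Implicit Arguments.
Unset Strict Implicit.
Unset Printing Implicit Defensive.

Import Order.TTheory GRing.Theory Num.Theory.
Import numFieldNormedType.Exports.

Local Open Scope classical_set_scope.
Local Open Scope ring_scope.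

(* Iterated Lebesgue integral over R^n (= 'rV[R]_n), coordinate by    *)
(* coordinate (equal to the integral w.r.t. n-dim Lebesgue measure for *)
(* nonnegative measurable integrands, by Tonelli).                      *)
Definition row_cons (R : realType) (n : nat) (t : R) (v : 'rV[R]_n) : 'rV[R]_n.+1 :=
  \row_(i < n.+1) (if unlift ord0 i is Some j then v ord0 j else t).

Fixpoint lebint (R : realType) (n : nat) : ('rV[R]_n -> \bar R) -> \bar R :=
  match n with
  | 0 => fun g => g 0
  | n'.+1 => fun g =>
      (\int[@lebesgue_measure R]_t lebint (fun v : 'rV[R]_n' => g (row_cons t v)))%E
  end.

Section Particles.
Variables (R : realType) (d : nat).

Definition pt := 'rV[R]_d.

Definition enorm (v : pt) : R := Num.sqrt (\sum_(i < d) v ord0 i ^+ 2).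

Definition is_cset (A : set pt) := compact A /\ A !=set0.

Record cset := CSet { cval : set pt; cvalP : is_cset cval }.

HB.instance Definition _ := gen_eqMixin cset.
HB.instance Definition _ := gen_choiceMixin cset.

Lemma is_cset0 : is_cset [set (0 : pt)].
Proof. by split; [exact: compact_set1 | exists 0]. Qed.

HB.instance Definition _ := isPointed.Build cset (CSet is_cset0).

Lemma is_cset_trans (K : cset) (x : pt) : is_cset ((fun y => y + x) @` cval K).
Proof.
case: K => A [cA [a Aa]] /=; split; last by exists (a + x); exists a.
apply: continuous_compact => //; apply: continuous_subspaceT => y.
by apply: continuousD; [exact: cvg_id | exact: cst_continuous].
Qed.

Definition ctrans (K : cset) (x : pt) : cset := CSet (is_cset_trans K x).

Definition dist_to (y : pt) (L : set pt) : R := inf [set enorm (y - l) | l in L].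

Definition dH (K L : cset) : R :=
  Num.max (sup [set dist_to y (cval L) | y in cval K])
          (sup [set dist_to y (cval K) | y in cval L]).

Definition dH_open (U : set cset) : Prop :=
  forall K, U K -> exists2 r : R, 0 < r & forall L, dH K L < r -> U L.

Definition Cm := g_sigma_algebraType dH_open.

Definition crad (A : set pt) (c : pt) : R := sup [set enorm (y - c) | y in A].
Definition zc (K : cset) : pt :=
  xget 0 [set c | forall c', crad (cval K) c <= crad (cval K) c'].

Definition bounded_pt (B : set pt) := exists M : R, forall x, B x -> enorm x <= M.
Definition Bb (Psi : set Cm) :=
  measurable Psi /\ exists B : set pt, bounded_pt B /\ Psi = zc @^-1` B.

(* counting: xi(S) for a simple counting measure xi given by its support *)
Definition ncount (S : set cset) : \bar R :=
  ereal_sup [set (n%:R)%:E | n in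
    [set n : nat | exists f : 'I_n -> cset, injective f /\ forall i, S (f i)]].

Definition lfin (xi : set cset) : Prop :=
  forall (K0 : cset) (r : R), finite_set (xi `&` [set K | dH K0 K <= r]).

Definition count_gen : set (set (set cset)) :=
  [set X | exists (B : set Cm) (A : set (\bar R)), measurable B /\ measurable A /\
     X = (fun xi : set cset => ncount (xi `&` B)) @^-1` A].

Definition Nm := g_sigma_algebraType count_gen.

Definition cfg_trans (xi : set cset) (x : pt) : set cset := [set ctrans K x | K in xi].

Definition cyl (n : nat) : set (set ('I_n -> cset)) :=
  [set X | exists (i : 'I_n) (A : set Cm), measurable A /\ X = [set t | A (t i)]].

Definition Cn (n : nat) := g_sigma_algebraType (@cyl n).

Definition admissible_potential (phi : forall n, ('I_n -> cset) -> \bar R) (Rphi : R) :=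
  forall n, (2 <= n)%N ->
    [/\ measurable_fun [set: Cn n] (phi n : Cn n -> \bar R),
        (forall t, phi n t != -oo%E),
        (forall (s : {perm 'I_n}) t, phi n (t \o s) = phi n t),
        (forall (x : pt) t, phi n (fun i => ctrans (t i) x) = phi n t) &
        (forall t, (exists i j : 'I_n, (i < j)%N /\ Rphi < dH (t i) (t j)) -> phi n t = 0%E)].

Definition ext (m : nat) (K : cset) (L : 'I_m -> cset) : 'I_m.+1 -> cset :=
  fun i => if unlift ord0 i is Some j then L j else K.

(* integral w.r.t. the m-th factorial measure of a simple counting measure *)
Definition fact_int (xi : set cset) (m : nat) (g : ('I_m -> cset) -> \bar R) : \bar R :=
  (\esum_(L in [set L : 'I_m -> cset | injective L /\ forall i, xi (L i)]) g L)%E.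

Definition Hpos (phi : forall n, ('I_n -> cset) -> \bar R) (K : cset) (xi : set cset) : \bar R :=
  (\esum_(m in [set m : nat | (0 < m)%N])
     ((m`!%:R)^-1)%:E * fact_int xi (fun L => maxe (phi m.+1 (ext K L)) 0))%E.
Definition Hneg (phi : forall n, ('I_n -> cset) -> \bar R) (K : cset) (xi : set cset) : \bar R :=
  (\esum_(m in [set m : nat | (0 < m)%N])
     ((m`!%:R)^-1)%:E * fact_int xi (fun L => maxe (- phi m.+1 (ext K L)) 0))%E.

(* the series sum_{n>=2} 1/(n-1)! int phi_n(K, .) dxi^(n-1); set to 0 if its
   negative part diverges *)
Definition Hser (phi : forall n, ('I_n -> cset) -> \bar R) (K : cset) (xi : set cset) : \bar R :=
  if Hneg phi K xi == +oo%E then 0%E else (Hpos phi K xi - Hneg phi K xi)%E.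

Definition kappa (phi : forall n, ('I_n -> cset) -> \bar R) (K : cset) (xi : set cset) : \bar R :=
  if `[< xi K >] then 0%E else expeR (- Hser phi K xi)%E.

Definition meets (K L : cset) := cval K `&` cval L !=set0.
Fixpoint chain (xi : set cset) (K : cset) (s : seq cset) (L : cset) : Prop :=
  match s with
  | [::] => K = L
  | M :: s' => xi M /\ meets K M /\ chain xi M s' L
  end.
Definition percolates (xi : set cset) : Prop :=
  exists K, xi K /\ infinite_set [set L | exists s, chain xi K s L].

(* Poisson process with intensity measure nu (given by its count distributions) *)
Definition poisson_pp (dO : measure_display) (Om : measurableType dO)
    (P : probability Om R) (Pi : Om -> set cset) (nu : set Cm -> \bar R) : Prop :=
  [/\ forall w, lfin (Pi w),
      measurable_fun [set: Om] (Pi : Om -> Nm) &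
      forall (k : nat) (B : 'I_k -> set Cm) (n : 'I_k -> nat),
        (forall i, measurable (B i)) -> (forall i, nu (B i) < +oo)%E ->
        (forall i j, i != j -> B i `&` B j = set0) ->
        P [set w | forall i, ncount (Pi w `&` B i) = (n i)%:R%:E] =
        (\prod_(i < k) (expR (- fine (nu (B i))) * fine (nu (B i)) ^+ n i
                         / (n i)`!%:R)%:E)%E].

Definition lambda_c (mu : set Cm -> \bar R) : \bar R :=
  ereal_sup [set l%:E | l in [set l : R | 0 <= l /\
     forall (dO : measure_display) (Om : measurableType dO) (P : probability Om R)
            (Pi : Om -> set cset),
       poisson_pp P Pi (fun A => l%:E * mu A)%E ->
       P [set w | percolates (Pi w)] = 0%E]].

Definition grain_dist (Q : probability Cm R) (Rg : R) :=
  Q [set K | zc K = 0 /\ forall y, cval K y -> enorm y <= Rg] = 1%E.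

Definition intensity_of (Q : probability Cm R) (mu : set Cm -> \bar R) :=
  forall Psi : set Cm, measurable Psi ->
    mu Psi = lebint (fun x : pt => Q [set K : Cm | Psi (ctrans K x)]).

(* admissible Gibbs process with activity lam, via the GNZ equation *)
Definition admissible_gibbs (dO : measure_display) (Om : measurableType dO)
    (P : probability Om R) (Xi : Om -> set cset) (lam : R)
    (mu : {measure set Cm -> \bar R})
    (phi : forall n, ('I_n -> cset) -> \bar R) (Rphi : R) : Prop :=
  [/\ (forall w, lfin (Xi w)) /\ measurable_fun [set: Om] (Xi : Om -> Nm),
      (forall (x : pt) (A : set Nm), measurable A ->
          P (Xi @^-1` A) = P ((fun w => cfg_trans (Xi w) x) @^-1` A)),
      P [set w | Xi w = set0] = 0%E,
      admissible_potential phi Rphi /\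
        (forall K xi, lfin xi -> (kappa phi K xi <= 1)%E) &
      forall f : (Cm * Nm)%type -> \bar R,
        measurable_fun [set: (Cm * Nm)%type] f -> (forall z, 0 <= f z)%E ->
        (\int[P]_w (\esum_(K in Xi w) f (K, Xi w `\ K)) =
         lam%:E * \int[P]_w \int[mu]_K (f (K, Xi w) * kappa phi K (Xi w)))%E].

End Particles.

(* Main.v *)
Require Import Defs.
From HB Require Import structures.
From mathcomp Require Import all_boot all_order all_algebra all_fingroup.
From mathcomp Require Import all_classical all_reals all_analysis.
From mathcomp Require Import measurable_realfun.
Import Order.TTheory GRing.Theory Num.Theory.
Import numFieldNormedType.Exports.
Local Open Scope classical_set_scope.
Local Open Scope ring_scope.
Section H.
Local Open Scope ereal_scope.
Lemma le_integral_nm d (T : measurableType d) (R : realType)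
  (mu : {measure set T -> \bar R}) (f g : T -> \bar R) :
  (forall x, 0 <= f x) -> (forall x, f x <= g x) ->
  \int[mu]_x f x <= \int[mu]_x g x.
Proof.
move=> f0 fg.
have g0 x : 0 <= g x by apply: le_trans (fg x).
rewrite /integral !patch_setT.
have -> : f^\- = cst 0.
  by apply/funext => x; apply: (@ge0_funenegE _ _ setT) => //; rewrite inE.
have -> : g^\- = cst 0.
  by apply/funext => x; apply: (@ge0_funenegE _ _ setT) => //; rewrite inE.
apply: leeB => //.
apply: ge_ereal_sup => _ [h hf <-]; apply: ereal_sup_ubound; exists h => //.
move=> x; apply: le_trans (hf x) _.
rewrite !funeposE; by rewrite ge_max !le_max fg lexx orbT.
Qed.

Variables (R : realType) (d : nat).

Lemma ncount_ge0 (A : set (cset R d)) : 0 <= ncount A.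
Proof.
apply: ereal_sup_ubound; exists 0%N => //.
by exists (fun i : 'I_0 => match i with Ordinal _ h => False_rect _ (notF h) end); split => -[].
Qed.

Lemma inj_esum (A : set (cset R d)) (c : \bar R) n (g : 'I_n -> cset R d) :
  0 <= c -> injective g -> (forall i, A (g i)) ->
  n%:R%:E * c <= \esum_(x in A) c.
Proof.
move=> c0 ig Ag; case: n g ig Ag => [|n] g ig Ag.
  by rewrite mul0e esum_ge0.
pose h k := g (inord k).
apply: esum_ge; exists (h @` `I_n.+1).
  split; first exact: finite_image.
  by move=> _ [k _ <-]; exact: Ag.
rewrite fsbig_image; last first.
  move=> a b /= ha hb /ig /(congr1 val).
  by move: ha hb; rewrite !inE /= => ha hb; rewrite /= !inordK.
rewrite -(fsbig_ord _ n.+1 (fun=> c)) big_const_ord.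
rewrite mule_natl; rewrite le_eqVlt; apply/orP; left; apply/eqP; elim: n.+1 => [|k IH] //; rewrite iterS -IH; case: k {IH} => [|k] /=; [by rewrite adde0 | by []].
Qed.

Lemma ncount_esum (A : set (cset R d)) (c : \bar R) :
  0 <= c -> ncount A * c <= \esum_(x in A) c.
Proof.
move=> c0; case: c c0 => [r| |] //; rewrite ?lee_fin => r0.
- have [->|rp] := eqVneq r 0%R.
    by rewrite mule0 esum_ge0.
  have rgt : (0 < r)%R by rewrite lt_def rp r0.
  rewrite -lee_pdivlMr //; apply: ge_ereal_sup => _ [n [g [ig Ag]] <-].
  rewrite lee_pdivlMr //; apply: (inj_esum A r%:E n g _ ig Ag); by rewrite lee_fin.
- have [[a Aa]|] := pselect (A !=set0).
    have : +oo <= \esum_(x in A) (+oo : \bar R).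
      apply: esum_ge; exists [set a]; first by split => // x ->.
      by rewrite fsbig_set1.
    by rewrite leye_eq => /eqP ->; rewrite leey.
  move=> nA.
  have -> : ncount A = 0.
    apply/eqP; rewrite eq_le ncount_ge0 andbT; apply: ge_ereal_sup => _ [n [g [ig Ag]] <-].
    case: n g ig Ag => [|n] g ig Ag //.
    by exfalso; apply: nA; exists (g ord0).
  by rewrite mul0e esum_ge0.
Qed.

Lemma mcount (B : set (Cm R d)) : measurable B ->
  measurable_fun [set: Nm R d] (fun xi : Nm R d => ncount (xi `&` B)).
Proof.
move=> mB _ Y mY; rewrite setTI; apply: sub_sigma_algebra; exists B, Y; split => //.
Qed.

Lemma mprod p (Psi : 'I_p -> set (Cm R d)) : (forall i, measurable (Psi i)) ->
  measurable_fun [set: Nm R d]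
    (fun xi : Nm R d => \prod_(i < p) ncount (xi `&` Psi i)).
Proof.
elim: p Psi => [|p IH] Psi mP.
  have -> : (fun xi : Nm R d => \prod_(i < 0) ncount (xi `&` Psi i)) = cst 1.
    by apply/funext => xi; rewrite big_ord0.
  exact: measurable_cst.
have -> : (fun xi : Nm R d => \prod_(i < p.+1) ncount (xi `&` Psi i)) =
  (fun xi : Nm R d => ncount (xi `&` Psi ord0)) \*
  (fun xi : Nm R d => \prod_(i < p) ncount (xi `&` Psi (lift ord0 i))).
  by apply/funext => xi; rewrite big_ord_recl.
apply: emeasurable_funM; first exact: mcount.
exact: (IH (fun i => Psi (lift ord0 i))).
Qed.

Lemma kappa_ge0 phi K xi : 0 <= @kappa R d phi K xi.
Proof. by rewrite /kappa; case: ifP => _; [exact: lexx | exact: expeR_ge0]. Qed.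

Lemma main (dO : measure_display) (Om : measurableType dO) (P : probability Om R)
  (Xi : Om -> set (cset R d)) (lam : R) (mu : {measure set (Cm R d) -> \bar R})
  phi Rphi :
  (0 <= lam)%R -> admissible_gibbs P Xi lam mu phi Rphi ->
  forall p (Psi : 'I_p -> set (Cm R d)), (forall i, measurable (Psi i)) ->
  (forall i j, i != j -> Psi i `&` Psi j = set0) ->
  \int[P]_w (\prod_(i < p) ncount (Xi w `&` Psi i))
     <= (lam ^+ p)%:E * \prod_(i < p) mu (Psi i).
Proof.
move=> lam0 [[lf mXi] _ _ [_ k1] gnz].
elim=> [|p IH] Psi mP dP.
  under eq_integral => x _ do rewrite big_ord0.
  by rewrite big_ord0 expr0 mul1e integral_cst // mul1e probability_le1.
pose G := fun xi : Nm R d => \prod_(i < p) ncount (xi `&` Psi (lift ord0 i)).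
have mG : measurable_fun setT G by apply: mprod => i; exact: mP.
have G0 xi : 0 <= G xi by apply: prode_ge0 => i _; exact: ncount_ge0.
pose f := fun z : (Cm R d * Nm R d)%type => G z.2 * (\1_(Psi ord0) z.1)%:E.
have mI : measurable_fun [set: Cm R d] (fun K => (\1_(Psi ord0) K)%:E : \bar R).
  by apply: measurableT_comp => //; exact: measurable_indic.
have mf : measurable_fun setT f.
  apply: emeasurable_funM; first exact: measurableT_comp mG measurable_snd.
  exact: measurableT_comp mI measurable_fst.
have f0 z : 0 <= f z by apply: mule_ge0 => //; rewrite lee_fin indicE.
have H := gnz f mf f0.
have Step1 : \int[P]_w (\prod_(i < p.+1) ncount (Xi w `&` Psi i)) <=
             \int[P]_w (\esum_(K in Xi w) f (K, Xi w `\ K)).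
  apply: le_integral_nm => [w|w].
    by apply: prode_ge0 => i _; exact: ncount_ge0.
  rewrite big_ord_recl.
  apply: le_trans (ncount_esum _ _ (G0 (Xi w))) _.
  rewrite esum_mkcondr; apply: le_esum => K XK.
  case: ifPn => KP; last exact: f0.
  rewrite /f /= indicE KP mule1.
  rewrite le_eqVlt; apply/orP; left; apply/eqP.
  rewrite /G; apply: eq_bigr => i _; congr ncount.
  apply/seteqP; split => x /=; last by move=> [[Xx _] Px].
  move=> [Xx Px]; split => //; split => // xK.
  have : (Psi ord0 `&` Psi (lift ord0 i)) K.
    by split; [exact/set_mem | rewrite -xK].
  by rewrite dP ?neq_lift.
apply: (le_trans Step1); rewrite H.
apply: (@le_trans _ _ (lam%:E * (mu (Psi ord0) * \int[P]_w G (Xi w)))).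
  apply: lee_wpmul2l; first by rewrite lee_fin.
  rewrite -ge0_integralZl //; last exact: measurableT_comp mG mXi.
  apply: le_integral_nm => w.
    by apply: integral_ge0 => K _; apply: mule_ge0 => //; exact: kappa_ge0.
  apply: (@le_trans _ _ (\int[mu]_K f (K, Xi w))).
    apply: le_integral_nm => K; first by apply: mule_ge0 => //; exact: kappa_ge0.
    rewrite -[X in _ <= X]mule1; apply: lee_wpmul2l => //; exact: k1.
  rewrite /f /= ge0_integralZl //; try (by move=> K _; rewrite lee_fin indicE).
  by rewrite integral_indic // setIT muleC lexx.
apply: (@le_trans _ _ (lam%:E * (mu (Psi ord0) *
   ((lam ^+ p)%:E * \prod_(i < p) mu (Psi (lift ord0 i)))))).
  apply: lee_wpmul2l; first by rewrite lee_fin.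
  apply: lee_wpmul2l => //.
  apply: (IH (fun i => Psi (lift ord0 i))) => [i|i j ij]; first exact: mP.
  by apply: dP; rewrite (inj_eq (@lift_inj _ ord0)).
rewrite big_ord_recl exprS EFinM -!muleA [X in _ <= _ * X]muleCA.
exact: lexx.
Qed.
End H.

Theorem lemma3p8 (R : realType) (d : nat) (Rg : R)
  (Q : probability (Cm R d) R) (mu : {measure set (Cm R d) -> \bar R})
  (dO : measure_display) (Om : measurableType dO) (P : probability Om R)
  (Xi : Om -> set (cset R d)) (lam : R)
  (phi : forall n, ('I_n -> cset R d) -> \bar R) (Rphi : R)
  (p : nat) (Psi : 'I_p -> set (Cm R d)) :
  0 < Rg -> grain_dist Q Rg -> intensity_of Q mu ->
  0 < lam -> admissible_gibbs P Xi lam mu phi Rphi ->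
  (lam%:E < lambda_c mu)%E ->
  (0 < p)%N ->
  (forall i, Bb (Psi i)) ->
  (forall i j, i != j -> Psi i `&` Psi j = set0) ->
  (\int[P]_w (\prod_(i < p) ncount (Xi w `&` Psi i))
     <= (lam ^+ p)%:E * \prod_(i < p) mu (Psi i))%E.
Proof.
move=> _ _ _ lam0 G _ _ bP dP.
apply: (@main R d dO Om P Xi lam mu phi Rphi (ltW lam0) G) => // i; exact: (bP i).1.
Qed.
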